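(* Let $S$ be a set, $x\in\mathbb{R}$, and $f:\mathbb{R}\to S$ a scenario that is past-affine-invariant on $(-\infty,x)$. Then there is an affine-invariant scenario $g:\mathbb{R}\to S$ such that $f\upharpoonright(-\infty,x)=g\upharpoonright(-\infty,x)$.
   Context: A scenario is a function $f:\mathbb{R}\to S$ for an arbitrary set $S$. Let $T_2$ be the set of all functions $t:\mathbb{R}\to\mathbb{R}$ of the form $t(y)=ay+c$ with $a>0$, $c\in\mathbb{R}$. A scenario $f$ is affine-invariant if there is some $t\in T_2$, not the identity, with $f=f\circ t$. A scenario $f$ is past-affine-invariant on $(-\infty,x)$ if there is a non-identity $t\in T_2$ with $f\upharpoonright(-\infty,x)=(f\circ t)\upharpoonright(-\infty,x)$. *)

(* Defs.v *)
From Stdlib Require Import Reals.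
Open Scope R_scope.

(* An element of T_2: t(y) = a*y + c with a > 0, represented by (a, c). *)
Definition affine (a c : R) : R -> R := fun y => a * y + c.

Definition nonid_T2 (a c : R) : Prop :=
  0 < a /\ affine a c <> (fun y => y).

Definition affine_invariant {S : Type} (f : R -> S) : Prop :=
  exists a c : R, nonid_T2 a c /\ forall y : R, f y = f (affine a c y).

Definition past_affine_invariant {S : Type} (f : R -> S) (x : R) : Prop :=
  exists a c : R, nonid_T2 a c /\ forall y : R, y < x -> f y = f (affine a c y).

(* Main.v *)
Require Import Defs.
From Stdlib Require Import Reals Lra Psatz Lia ClassicalEpsilon FunctionalExtensionality.
Open Scope R_scope.

Lemma key (T : Type) (x : R) (f : R -> T) (a c : R) :
  0 < a -> affine a c <> (fun y => y) ->
  affine a c x <= x ->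
  (forall y, y < x -> f y = f (affine a c y)) ->
  exists g : R -> T, affine_invariant g /\ (forall y : R, y < x -> f y = g y).
Proof.
  intros Ha Hn Hx Hf.
  set (u := affine a c).
  assert (HD : forall y, y < x -> u y < x).
  { intros y Hy. unfold u, affine in *. nra. }
  assert (HDn : forall n y, y < x -> Nat.iter n u y < x).
  { induction n; intros y Hy; simpl; auto. }
  assert (Hfn : forall n y, y < x -> f (Nat.iter n u y) = f y).
  { induction n; intros y Hy; simpl; auto.
    fold u in Hf. rewrite <- (Hf _ (HDn n y Hy)). auto. }
  assert (Hcomm : forall n y, Nat.iter n u (u y) = Nat.iter (S n) u y).
  { induction n; intros y; simpl; auto. rewrite IHn. reflexivity. }
  assert (Hadd : forall k m y, Nat.iter (m + k) u y = Nat.iter m u (Nat.iter k u y)).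
  { intros k m y. apply Nat.iter_add. }
  assert (Hwd : forall k m y, Nat.iter k u y < x -> Nat.iter m u y < x ->
     f (Nat.iter k u y) = f (Nat.iter m u y)).
  { intros k m y Hk Hm. destruct (Nat.le_ge_cases k m) as [H|H].
    - assert (E : m = ((m - k) + k)%nat) by lia.
      rewrite E, Hadd. rewrite (Hfn (m - k)%nat); auto.
    - assert (E : k = ((k - m) + m)%nat) by lia.
      rewrite E, Hadd. rewrite (Hfn (k - m)%nat); auto. }
  set (g := fun y => match excluded_middle_informative (exists n, Nat.iter n u y < x) with
     | left H => f (Nat.iter (proj1_sig (constructive_indefinite_description _ H)) u y)
     | right _ => f x end).
  exists g. split.
  - exists a, c. split. split; auto.
    intro y. unfold g.
    destruct (excluded_middle_informative (exists n, Nat.iter n u y < x)) as [H1|H1];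
    destruct (excluded_middle_informative (exists n, Nat.iter n u (affine a c y) < x)) as [H2|H2].
    + destruct (constructive_indefinite_description _ H1) as [k Hk].
      destruct (constructive_indefinite_description _ H2) as [m Hm]. simpl.
      rewrite Hcomm in Hm. rewrite Hcomm. apply Hwd; auto.
    + exfalso. apply H2. destruct H1 as [n Hn']. exists n. fold u.
      rewrite Hcomm. simpl. auto.
    + exfalso. apply H1. destruct H2 as [n Hn']. exists (Datatypes.S n).
      rewrite Hcomm in Hn'. auto.
    + reflexivity.
  - intros y Hy. unfold g.
    destruct (excluded_middle_informative (exists n, Nat.iter n u y < x)) as [H1|H1].
    + destruct (constructive_indefinite_description _ H1) as [k Hk]. simpl.
      symmetry. apply Hfn; auto.
    + exfalso. apply H1. exists 0%nat. simpl. auto.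
Qed.

Theorem lemma2 (S : Type) (x : R) (f : R -> S) :
  past_affine_invariant f x ->
  exists g : R -> S, affine_invariant g /\ (forall y : R, y < x -> f y = g y).
Proof.
  intros [a [c [[Ha Hn] Hf]]].
  destruct (Rle_or_lt (affine a c x) x) as [Hx|Hx].
  - eapply key; eauto.
  - apply (key S x f (/ a) (- c / a)).
    + apply Rinv_0_lt_compat; auto.
    + intro E. apply Hn.
      assert (E0 := equal_f E 0). assert (E1 := equal_f E 1).
      unfold affine in *.
      assert (c = 0). { field_simplify in E0; [|lra].
        assert (- c = 0 * a) by (apply (Rmult_eq_reg_r (/a)); [field_simplify; lra|]; 
          apply Rinv_neq_0_compat; lra). lra. }
      subst c. assert (a = 1).
      { assert (/a = 1) by (rewrite <- E1; field; lra).
        rewrite <- (Rinv_inv a). rewrite H. apply Rinv_1. }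
      subst a. apply functional_extensionality. intro y. ring.
    + unfold affine in *. apply (Rmult_le_reg_l a); auto.
      field_simplify; lra.
    + intros y Hy. unfold affine.
      rewrite (Hf (/ a * y + - c / a)).
      * f_equal. unfold affine. field. lra.
      * unfold affine in Hx. apply (Rmult_lt_reg_l a); auto.
        field_simplify; lra.
Qed.
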